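(* An even nonnegative integer $n$ satisfies $v(n)=3$ if and only if $n\in\{20,26,34,46,48,60\}$.
   Context: A hyperbinary expansion of a nonnegative integer $n$ is a word $x_0\cdots x_k$ over $\{0,1,2\}$ with $x_0\ne0$ and $\sum_i x_i2^{k-i}=n$. The empty word is the unique hyperbinary expansion of $0$. Write $\mathcal H(n)$ for the set of such expansions and $b(n)=|\mathcal H(n)|$. $A(n)$ is the directed graph on $\mathcal H(n)$ with an arc from $\mathbf x02\mathbf y$ to $\mathbf x10\mathbf y$, from $2\mathbf y$ to $10\mathbf y$, and from $\mathbf x12\mathbf y$ to $\mathbf x20\mathbf y$, for arbitrary words $\mathbf x,\mathbf y$ whenever both endpoints lie in $\mathcal H(n)$. $A(n)$ is connected. $v(n)$ denotes the cyclomatic number of $A(n)$: (number of arcs) $-\,b(n)+1$. *)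

(* Defs.v *)
(* Words over {0,1,2} are represented as seq nat. *)
From mathcomp Require Import all_boot all_algebra.
Set Implicit Arguments. Unset Strict Implicit. Unset Printing Implicit Defensive.

(* value of a word x_0 ... x_k : sum_i x_i 2^(k-i) (Horner scheme) *)
Definition wval (w : seq nat) : nat := foldl (fun acc d => acc.*2 + d) 0 w.

Definition is_hyper (n : nat) (w : seq nat) : bool :=
  all (fun d => d <= 2) w && (if w is x0 :: _ then x0 != 0 else true) && (wval w == n).

Fixpoint words (k : nat) : seq (seq nat) :=
  if k is k'.+1 then [seq d :: w | d <- [:: 0; 1; 2], w <- words k'] else [:: [::]].

(* H(n): a word of length L with nonzero leading digit has value >= 2^(L-1),
   so every hyperbinary expansion of n has length <= trunc_log 2 n + 1; we
   enumerate all words of such lengths and keep the expansions of n. *)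
Definition Hexp (n : nat) : seq (seq nat) :=
  [seq w <- flatten [seq words k | k <- iota 0 (trunc_log 2 n).+2] | is_hyper n w].

Definition b (n : nat) : nat := size (Hexp n).

Definition rewrite_at (u : seq nat) (i : nat) : option (seq nat) :=
  match drop i u with
  | 0 :: 2 :: y => Some (take i u ++ [:: 1, 0 & y])
  | 1 :: 2 :: y => Some (take i u ++ [:: 2, 0 & y])
  | _ => None
  end.

Definition step (u : seq nat) : seq (seq nat) :=
  pmap (rewrite_at u) (iota 0 (size u)) ++
  (if u is 2 :: y then [:: [:: 1, 0 & y]] else [::]).

Definition arc (u v : seq nat) : bool := v \in step u.

Definition narcs (n : nat) : nat :=
  size [seq p <- [seq (u, v) | u <- Hexp n, v <- Hexp n] | arc p.1 p.2].

Definition cyclo (n : nat) : int := (narcs n)%:Z - (b n)%:Z + 1.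

(* Main.v *)
Require Import Defs.
From mathcomp Require Import all_boot all_algebra zify.
Require Import Defs.

Lemma foldl_wval a w : foldl (fun acc d => acc.*2 + d) a w = a * 2 ^ size w + wval w.
Proof.
rewrite /wval; elim: w a => [|d w IH] a /=; first by rewrite muln1 addn0.
rewrite IH (IH (0.*2 + d)) expnS; lia.
Qed.

Lemma wval_cons d w : wval (d :: w) = d * 2 ^ size w + wval w.
Proof. by rewrite {1}/wval /= foldl_wval double0. Qed.

Lemma wval_rcons w d : wval (rcons w d) = (wval w).*2 + d.
Proof. by rewrite /wval foldl_rcons. Qed.

Lemma mem_words k w : (w \in words k) = (size w == k) && all (fun d => d <= 2) w.
Proof.
elim: k w => [|k IH] w; first by case: w.
have ->: words k.+1 = [seq d :: u | d <- [::0;1;2], u <- words k] by [].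
apply/allpairsPdep/idP => [[d [u [Hd Hu ->]]]|].
  rewrite IH in Hu; case/andP: Hu => /eqP Hs Ha; rewrite /= Hs eqxx Ha andbT.
  by move: Hd; rewrite !inE => /or3P [] /eqP ->.
case: w => [|d u] //= /andP [/eqP Hs /andP [Hd Hu]].
exists d, u; split => //.
  by rewrite !inE; move: Hd; case: d => [|[|[|]]].
by rewrite IH; case: Hs => ->; rewrite eqxx.
Qed.

Lemma words_uniq k : uniq (words k).
Proof.
elim: k => // k IH.
have ->: words k.+1 = [seq d :: u | d <- [::0;1;2], u <- words k] by [].
apply: allpairs_uniq_dep => //.
by move=> [a u] [c v] _ _ /= [-> ->].
Qed.

Lemma hyper_size n w : is_hyper n w -> size w <= (trunc_log 2 n).+1.
Proof.
case: w => [|d w] // /andP [/andP [_ Hd] /eqP <-].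
rewrite ltnS /=; apply: trunc_log_max => //.
rewrite wval_cons; case: d Hd => // d _; rewrite mulSn; apply: leq_trans (leq_addr _ _) (leq_addr _ _).
Qed.

Lemma mem_Hexp n w : (w \in Hexp n) = is_hyper n w.
Proof.
rewrite /Hexp mem_filter andb_idr // => H.
apply/flattenP; exists (words (size w)).
  apply/mapP; exists (size w) => //; rewrite mem_iota add0n ltnS.
  exact: hyper_size.
rewrite mem_words eqxx /=; by case/andP: H => /andP [].
Qed.

Lemma uniq_flat_words s : uniq s -> uniq (flatten [seq words k | k <- s]).
Proof.
elim: s => //= a s IH /andP [Ha Hs]; rewrite cat_uniq words_uniq IH // andbT.
apply/hasP => [[w /flattenP [t /mapP [k Hk ->] Hw] Hw2]].
move: Hw Hw2; rewrite !mem_words => /andP [/eqP Hk1 _] /andP [/eqP Ha1 _].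
by move: Ha; rewrite -Ha1 Hk1 Hk.
Qed.

Lemma Hexp_uniq n : uniq (Hexp n).
Proof. by apply: filter_uniq; apply: uniq_flat_words; apply: iota_uniq. Qed.

Definition hyp (u : seq nat) := is_hyper (wval u) u.

Lemma is_hyperE m u : is_hyper m u = hyp u && (wval u == m).
Proof. by rewrite /hyp /is_hyper eqxx andbT. Qed.

Lemma hyp_rcons u d :
  hyp (rcons u d) = [&& d <= 2, hyp u & (u == [::]) ==> (d != 0)].
Proof.
rewrite /hyp /is_hyper !eqxx !andbT all_rcons.
case: u => [|a u] /=; first by rewrite andbT.
by rewrite andbT; case: (d <= 2) => //=; rewrite andbT.
Qed.

Lemma mem_map_rcons (s : seq (seq nat)) u d e :
  (rcons u d \in map (rcons^~ e) s) = (d == e) && (u \in s).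
Proof.
apply/mapP/andP => [[x Hx /rcons_inj [-> ->]] | [/eqP -> Hu]]; first by rewrite eqxx.
by exists u.
Qed.

Lemma nil_notin_map (s : seq (seq nat)) e : ([::] \in map (rcons^~ e) s) = false.
Proof. by apply/mapP => [[[|? ?] _]]. Qed.

Lemma Hexp_odd m : perm_eq (Hexp m.*2.+1) (map (rcons^~1) (Hexp m)).
Proof.
apply: uniq_perm; first exact: Hexp_uniq.
  rewrite map_inj_uniq ?Hexp_uniq //; exact: rcons_injl.
case/lastP => [|u d]; first by rewrite nil_notin_map mem_Hexp.
rewrite mem_map_rcons !mem_Hexp !is_hyperE hyp_rcons wval_rcons.
case: (hyp u) => /=; last by rewrite !andbF.
case: d => [|[|[|d]]] /=; rewrite ?andbF ?implybT /=;
  first (by apply/negP => /andP [_ /eqP]; lia);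
  try (by apply/eqP/eqP; lia); try (by apply/negP => /eqP; lia).
Qed.

Lemma Hexp_even m : perm_eq (Hexp m.+1.*2)
  (map (rcons^~0) (Hexp m.+1) ++ map (rcons^~2) (Hexp m)).
Proof.
apply: uniq_perm; first exact: Hexp_uniq.
  rewrite cat_uniq !map_inj_uniq ?Hexp_uniq //; try exact: rcons_injl.
  rewrite andbT /=; apply/hasP => [[w /mapP [x _ ->]]].
  by rewrite mem_map_rcons.
case/lastP => [|u d]; first by rewrite mem_cat !nil_notin_map mem_Hexp.
rewrite mem_cat !mem_map_rcons !mem_Hexp !is_hyperE hyp_rcons wval_rcons.
case: (hyp u) => /=; last by rewrite !andbF.
case: d => [|[|[|d]]] /=; rewrite ?andbF ?implybT ?orbF /=.
- apply/andP/eqP => [[_ /eqP]|E]; first lia.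
  split; last by apply/eqP; lia.
  by apply/implyP => /eqP Hu; move: E; rewrite Hu.
- by apply/negP => /eqP; lia.
- by apply/eqP/eqP; lia.
- by [].
Qed.

Definition arcR (u v : seq nat) : Prop :=
  (exists x y, u = x ++ [:: 0, 2 & y] /\ v = x ++ [:: 1, 0 & y]) \/
  (exists x y, u = x ++ [:: 1, 2 & y] /\ v = x ++ [:: 2, 0 & y]) \/
  (exists y, u = 2 :: y /\ v = [:: 1, 0 & y]).

Lemma arcP u v : reflect (arcR u v) (arc u v).
Proof.
rewrite /arc /step mem_cat mem_pmap; apply: (iffP orP).
  case => [/mapP [i Hi E] | H].
    have Hu := cat_take_drop i u.
    move: E; rewrite /rewrite_at; case E': (drop i u) => [|a [|c y]]; first by []; first by case: a E' => [|[|[|]]].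
    case: a c E' => [|[|a]] [|[|[|c]]] //= E' [->].
      by left; exists (take i u), y; rewrite -E' cat_take_drop.
    by right; left; exists (take i u), y; rewrite -E' cat_take_drop.
  case: u H => [|[|[|[|a]]] y] //; rewrite inE => /eqP ->.
  by right; right; exists y.
case => [[x [y [-> ->]]] | [[x [y [-> ->]]] | [y [-> ->]]]].
- left; apply/mapP; exists (size x).
    by rewrite mem_iota add0n size_cat /= addnS ltnS leq_addr.
  by rewrite /rewrite_at drop_size_cat // take_size_cat.
- left; apply/mapP; exists (size x).
    by rewrite mem_iota add0n size_cat /= addnS ltnS leq_addr.
  by rewrite /rewrite_at drop_size_cat // take_size_cat.
- by right; rewrite inE.
Qed.

Definition bmp (u : seq nat) : option (seq nat) :=
  if u is a :: s then
    match last a s with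
    | 0 => Some (rcons (belast a s) 1)
    | 1 => Some (rcons (belast a s) 2)
    | _ => None
    end
  else Some [:: 1].

Lemma bmp_rcons x d : bmp (rcons x d) =
  match d with 0 => Some (rcons x 1) | 1 => Some (rcons x 2) | _ => None end.
Proof. by case: x => [|a x] //=; rewrite last_rcons belast_rcons. Qed.

Lemma cat2 (x : seq nat) a c : x ++ [:: a; c] = rcons (rcons x a) c.
Proof. by rewrite -!cats1 -catA. Qed.

Lemma arc_rcons u v d e : arc (rcons u d) (rcons v e) =
  if d == e then arc u v else [&& d == 2, e == 0 & bmp u == Some v].
Proof.
apply/arcP/idP.
  case => [[x [y [Eu Ev]]] | [[x [y [Eu Ev]]] | [y [Eu Ev]]]];
    case/lastP: y Eu Ev => [|y f] Eu Ev.
  - move: Eu Ev; rewrite !cat2 => /rcons_inj [-> ->] /rcons_inj [-> ->].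
    by rewrite /= bmp_rcons.
  - move: Eu Ev; rewrite -!rcons_cons -!rcons_cat => /rcons_inj [-> ->] /rcons_inj [-> ->].
    by rewrite eqxx; apply/arcP; left; exists x, y.
  - move: Eu Ev; rewrite !cat2 => /rcons_inj [-> ->] /rcons_inj [-> ->].
    by rewrite /= bmp_rcons.
  - move: Eu Ev; rewrite -!rcons_cons -!rcons_cat => /rcons_inj [-> ->] /rcons_inj [-> ->].
    by rewrite eqxx; apply/arcP; right; left; exists x, y.
  - move: Eu Ev; rewrite -[[:: 2]]/(rcons [::] 2) -[[:: 1; 0]]/(rcons [:: 1] 0).
    by move=> /rcons_inj [-> ->] /rcons_inj [-> ->].
  - move: Eu Ev; rewrite -!rcons_cons => /rcons_inj [-> ->] /rcons_inj [-> ->].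
    by rewrite eqxx; apply/arcP; right; right; exists y.
case: eqP => [<- /arcP | ne].
  case => [[x [y [-> ->]]] | [[x [y [-> ->]]] | [y [-> ->]]]].
  - by left; exists x, (rcons y d); rewrite !rcons_cat.
  - by right; left; exists x, (rcons y d); rewrite !rcons_cat.
  - by right; right; exists (rcons y d).
case/and3P => /eqP -> /eqP ->; case/lastP: u => [|x a].
  by move=> /eqP [<-]; right; right; exists [::].
rewrite bmp_rcons; case: a => [|[|a]] // /eqP [<-].
  by left; exists x, [::]; rewrite !cat2.
by right; left; exists x, [::]; rewrite !cat2.
Qed.

Definition NA (s t : seq (seq nat)) := \sum_(u <- s) count (arc u) t.

Lemma count_allpairs (P : pred (seq nat * seq nat)) (s t : seq (seq nat)) :
  count P [seq (u, v) | u <- s, v <- t] = \sum_(u <- s) count (fun v => P (u, v)) t.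
Proof.
elim: s => [|a s IH]; first by rewrite big_nil.
by rewrite allpairs_cons count_cat IH big_cons count_map.
Qed.

Lemma narcsE n : narcs n = NA (Hexp n) (Hexp n).
Proof. by rewrite /narcs size_filter count_allpairs. Qed.

Lemma NA_perm s s' t t' : perm_eq s s' -> perm_eq t t' -> NA s t = NA s' t'.
Proof.
move=> Hs /permP Ht; rewrite /NA (perm_big _ Hs); apply: eq_bigr => u _; exact: Ht.
Qed.

Arguments NA_perm {s s' t t'}.

Definition cc n := count (fun u => bmp u != None) (Hexp n).

Lemma b_odd m : b m.*2.+1 = b m.
Proof. by rewrite /b (perm_size (Hexp_odd m)) size_map. Qed.

Lemma b_even m : b m.+1.*2 = b m.+1 + b m.
Proof. by rewrite /b (perm_size (Hexp_even m)) size_cat !size_map. Qed.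

Lemma narcs_odd m : narcs m.*2.+1 = narcs m.
Proof.
rewrite !narcsE (NA_perm (Hexp_odd m) (Hexp_odd m)) /NA big_map.
apply: eq_bigr => u _; rewrite count_map; apply: eq_count => v /=.
by rewrite arc_rcons eqxx.
Qed.

Lemma bmp_hyper m x w : x \in Hexp m -> bmp x = Some w -> w \in Hexp m.+1.
Proof.
case/lastP: x => [|y a].
  by rewrite mem_Hexp /is_hyper /= => /eqP <- [<-].
rewrite bmp_rcons !mem_Hexp !is_hyperE hyp_rcons wval_rcons.
case: a => [|[|a]] // /andP [/and3P [_ Hy Hn] /eqP E] [<-];
  rewrite hyp_rcons wval_rcons Hy /= ?implybT /=; apply/eqP; try lia.
Qed.

Arguments bmp_hyper {m x w}.
Lemma count_bmp {m x} : x \in Hexp m ->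
  count (fun v => bmp x == Some v) (Hexp m.+1) = (bmp x != None).
Proof.
move=> Hx; case E: (bmp x) => [w|] /=.
  rewrite (eq_count (a2 := pred1 w)); last by move=> v /=; rewrite eq_sym.
  by rewrite count_uniq_mem ?Hexp_uniq // (bmp_hyper Hx E).
by rewrite (eq_count (a2 := pred0)) ?count_pred0.
Qed.

Lemma count_sumb (T : Type) (P : pred T) s : count P s = \sum_(x <- s) (P x : nat).
Proof. by elim: s => [|x s IH]; rewrite ?big_nil ?big_cons //= IH. Qed.

Lemma narcs_even m : narcs m.+1.*2 = narcs m.+1 + narcs m + cc m.
Proof.
rewrite !narcsE (NA_perm (Hexp_even m) (Hexp_even m)) /NA big_cat /= !big_map.
rewrite -addnA; congr (_ + _).
  apply: eq_bigr => u _; rewrite count_cat !count_map.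
  rewrite [X in _ + X](eq_count (a2 := pred0)) ?count_pred0 ?addn0.
    by apply: eq_count => v /=; rewrite arc_rcons eqxx.
  by move=> v /=; rewrite arc_rcons.
rewrite /cc count_sumb -big_split /=; apply: eq_big_seq => u Hu.
rewrite count_cat !count_map addnC; congr (_ + _).
  by apply: eq_count => v /=; rewrite arc_rcons eqxx.
rewrite -(count_bmp Hu); apply: eq_count => v /=; by rewrite arc_rcons.
Qed.

Lemma cc0 : cc 0 = 1. Proof. by vm_compute. Qed.

Lemma cc_odd m : cc m.*2.+1 = b m.
Proof.
rewrite /cc (permP (Hexp_odd m)) count_map /b -count_predT.
by apply: eq_count => u /=; rewrite bmp_rcons.
Qed.

Lemma cc_even m : cc m.+1.*2 = b m.+1.
Proof.
rewrite /cc (permP (Hexp_even m)) count_cat !count_map /b -count_predT.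
have -> : count (preim (rcons^~ 2) (fun u => bmp u != None)) (Hexp m) = 0.
  by rewrite (eq_count (a2 := pred0)) ?count_pred0 // => u /=; rewrite bmp_rcons.
by rewrite addn0; apply: eq_count => u /=; rewrite bmp_rcons.
Qed.

Lemma b0 : b 0 = 1. Proof. by vm_compute. Qed.
Lemma narcs0 : narcs 0 = 0. Proof. by vm_compute. Qed.

Fixpoint F (f n : nat) : nat * nat * nat :=
  match f with
  | 0 => (1, 0, 1)
  | f'.+1 =>
    if n is 0 then (1, 0, 1)
    else if odd n then (let '(b0, N0, _) := F f' n./2 in (b0, N0, b0))
    else (let '(b1, N1, _) := F f' n./2 in
          let '(b0, N0, c0) := F f' (n./2).-1 in (b1 + b0, N1 + N0 + c0, b1))
  end.

Lemma decomp n : [\/ n = 0, exists m, n = m.*2.+1 | exists k, n = k.+1.*2].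
Proof.
have E := odd_double_half n; case: (odd n) E => /= E.
  by apply: Or32; exists n./2; lia.
case Eh: (n./2) E => [|k] E; first by apply: Or31; rewrite -E.
by apply: Or33; exists k; lia.
Qed.

Lemma F_ok f n : n < f -> F f n = (b n, narcs n, cc n).
Proof.
elim: f n => // f IH n Hn.
case: (decomp n) Hn => [->|[m ->]|[k ->]] Hn.
- by rewrite /= b0 narcs0 cc0.
- rewrite /= odd_double uphalf_double /= IH; last by lia.
  by rewrite b_odd narcs_odd cc_odd.
- rewrite [F _ _]/= odd_double /= -[k.+1.*2]/(k.+1.*2) half_double /= !IH; try lia.
  by rewrite b_even narcs_even cc_even.
Qed.

Lemma b_pos n : 0 < b n.
Proof.
elim/ltn_ind: n => n IH; case: (decomp n) IH => [->|[m ->]|[k ->]] IH.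
- by rewrite b0.
- rewrite b_odd; apply: IH; lia.
- rewrite b_even addn_gt0 IH //; lia.
Qed.

Lemma cc_pos n : 0 < cc n.
Proof.
case: (decomp n) => [->|[m ->]|[k ->]]; by rewrite ?cc0 ?cc_odd ?cc_even ?b_pos.
Qed.

Lemma b_even2 k : 2 <= b k.+1.*2.
Proof. have := b_pos k.+1; have := b_pos k; rewrite b_even; lia. Qed.

Lemma vnn n : b n <= narcs n + 1.
Proof.
elim/ltn_ind: n => n IH; case: (decomp n) IH => [->|[m ->]|[k ->]] IH.
- by rewrite b0.
- rewrite b_odd narcs_odd; apply: IH; lia.
- rewrite b_even narcs_even; have := IH k.+1; have := IH k; have := cc_pos k; lia.
Qed.

Definition L := [:: 20; 26; 34; 46; 48; 60].

Lemma base1 : all (fun n => let '(bb, N, _) := F 200 n in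
   odd n || ((N + 1 == bb + 3) == (n \in L))) (iota 0 62).
Proof. by vm_compute. Qed.

Lemma base2 : all (fun n => let '(bb, N, _) := F 200 n in
   odd n || (N + 1 == bb) || (bb + 4 <= N + 1)) (iota 62 66).
Proof. by vm_compute. Qed.

Lemma base3 : all (fun n => odd n || (5 <= (F 200 n).1.1)) (iota 16 48).
Proof. by vm_compute. Qed.

Lemma Lb p : ~~ odd p -> 16 <= p -> 5 <= b p.
Proof.
elim/ltn_ind: p => p IH Hp H16.
case: (ltnP p 64) => Hp64.
  have /allP /(_ p) := base3; rewrite mem_iota F_ok; last lia.
  by rewrite (negbTE Hp) /=; apply; lia.
case: (decomp p) => [E|[m E]|[k E]]; first lia.
  by move: Hp; rewrite E /= odd_double.
rewrite E b_even; have := b_pos k; have := b_pos k.+1.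
case: (decomp k) => [Ek|[m Ek]|[j Ek]]; first lia.
  have E2 : k.+1 = m.+1.*2 by rewrite Ek; lia.
  rewrite E2; have := IH m.+1.*2 ltac:(lia) ltac:(by rewrite odd_double) ltac:(lia); lia.
have := IH k ltac:(lia) ltac:(by rewrite Ek odd_double) ltac:(lia); lia.
Qed.

Lemma mainC n : ~~ odd n -> 62 <= n ->
  narcs n + 1 = b n \/ b n + 4 <= narcs n + 1.
Proof.
elim/ltn_ind: n => n IH Hn H62.
case: (ltnP n 128) => Hn128.
  have /allP /(_ n) := base2; rewrite mem_iota F_ok; last lia.
  rewrite (negbTE Hn) /= => /(_ ltac:(lia)) /orP [/eqP|]; lia.
case: (decomp n) => [E|[m E]|[k E]]; first lia.
  by move: Hn; rewrite E /= odd_double.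
subst n.
case: (decomp k) => [Ek|[p Ek]|[j Ek]]; first lia.
-
  subst k; rewrite narcs_even b_even -doubleS narcs_odd b_odd cc_odd.
  have Hq := IH p.+1.*2 ltac:(lia) ltac:(by rewrite odd_double) ltac:(lia).
  move: Hq; rewrite narcs_even b_even => Hq.
  have V1 := vnn p.+1; have V0 := vnn p; have C0 := cc_pos p; have B0 := b_pos p.
  case: Hq => Hq; last lia.
  case: (decomp p) => [Ep|[r Ep]|[i Ep]]; first lia.
  + have Hc : cc p = b p by rewrite Ep cc_odd b_odd.
    lia.
  + have Hc : cc p = b i.+1 by rewrite Ep cc_even.
    have Hb : b p = b i.+1 + b i by rewrite Ep b_even.
    have := b_pos i; have := b_pos i.+1.
    have Hi : ~~ odd i.
      apply/negP => Hodd; have := b_even2 i./2.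
      have -> : (i./2).+1.*2 = i.+1 by have := odd_double_half i; rewrite Hodd; lia.
      lia.
    have := Lb i Hi ltac:(lia); lia.
-
  subst k; rewrite narcs_even b_even cc_even -[j.+1.*2.+1]/(j.+1.*2.+1) narcs_odd b_odd.
  have Hq := IH j.+1.*2 ltac:(lia) ltac:(by rewrite odd_double) ltac:(lia).
  move: Hq; rewrite narcs_even b_even => Hq.
  have V1 := vnn j.+1; have V0 := vnn j; have C0 := cc_pos j; have B0 := b_pos j.+1.
  case: Hq => Hq; last lia.
  case: (decomp j) => [Ej|[r Ej]|[i Ej]]; first lia.
  + have Hr : j.+1 = r.+1.*2 by rewrite Ej; lia.
    have := Lb j.+1 ltac:(by rewrite Hr odd_double) ltac:(lia).
    lia.
  + have Hr : j.+1 = i.+1.*2.+1 by rewrite Ej.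
    have Hc : cc j = b i.+1 by rewrite Ej cc_even.
    have Hb : b j.+1 = b i.+1 by rewrite Hr b_odd.
    lia.
Qed.

Theorem mainTheorem5 (n : nat) :
  ~~ odd n -> (cyclo n = Posz 3 <-> n \in [:: 20; 26; 34; 46; 48; 60]).
Proof.
move=> Hn.
have -> : (cyclo n = Posz 3) <-> (narcs n + 1 = b n + 3).
  by rewrite /cyclo; split => H; lia.
case: (ltnP n 62) => H.
  have /allP /(_ n) := base1; rewrite mem_iota F_ok; last lia.
  rewrite (negbTE Hn) /= => /(_ ltac:(lia)) /eqP E.
  rewrite -[_ \in _]/(n \in L) -E.
  by split => [->|/eqP //]; rewrite eqxx.
have := mainC n Hn H; split => [Hv|Hin]; first lia.
have : all (fun x => x < 62) [:: 20; 26; 34; 46; 48; 60] by [].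
move/allP/(_ n Hin); lia.
Qed.
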